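(* Let the number of attacked inputs and outputs be bounded by $r$ and $s$, respectively. Under the attack model described in the context, the state of the system can be reconstructed (possibly with bounded delay) from the controller input $u$ and observed output $y$ if and only if the system $(A,B,C,D)$ is $(2r,2s)$-sparse strongly observable.
   Context: Consider the discrete-time LTI system $x(t+1)=Ax(t)+Bu_S(t)$, $y_S(t)=Cx(t)+Du_S(t)$ with $u_S(t)\in\mathbb{R}^m$, $x(t)\in\mathbb{R}^n$, $y_S(t)\in\mathbb{R}^p$, where $\begin{bmatrix}B^T & D^T\end{bmatrix}^T$ has full column rank. Attack model: $u_S(t)=u(t)+w(t)$ and $y(t)=y_S(t)+a(t)$, where $u(t)$ is the controller-designed input, $y(t)$ is the observed output, and $w(t)\in\mathbb{R}^m$, $a(t)\in\mathbb{R}^p$ are arbitrary signals injected by an adversary (no constraints on magnitude, statistics, or timing). The adversary chooses fixed (unknown to the controller) sets $\Gamma_u\subseteq\{1,\dots,m\}$ with $|\Gamma_u|\le r$ and $\overline{\Gamma}_y\subseteq\{1,\dots,p\}$ with $|\overline{\Gamma}_y|\le s$, such that for all $t$ the nonzero components of $w(t)$ lie in $\Gamma_u$ and the nonzero components of $a(t)$ lie in $\overline{\Gamma}_y$. The controller observes only $y(t)$ and knows $u(t)$. An LTI system is strongly observable if for any initial state $x(0)$ and any (unknown) input sequence there exists an integer $\tau$ such that $x(0)$ can be uniquely recovered from $y(0),\dots,y(\tau)$ (equivalently, $y(t)=0$ for all $t$ implies $x(0)=0$). An LTI system $(A,B,C,D)$ with $m$ inputs and $p$ outputs is $(r,s)$-sparse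 strongly observable if for every $\Gamma_u\subseteq\{1,\dots,m\}$ with $|\Gamma_u|\le r$ and every $\Gamma_y\subseteq\{1,\dots,p\}$ with $|\Gamma_y|\ge p-s$, the subsystem $(A, B|_{(\cdot,\Gamma_u)}, C|_{(\Gamma_y,\cdot)}, D|_{(\Gamma_y,\Gamma_u)})$ is strongly observable, where $M|_{(O_1,O_2)}$ denotes the submatrix of $M$ keeping rows indexed by $O_1$ and columns indexed by $O_2$ (a dot meaning all rows/columns). *)

(* Defs.v *)
From HB Require Import structures.
From mathcomp Require Import all_boot all_order all_algebra.
From mathcomp Require Import reals.
Set Implicit Arguments. Unset Strict Implicit. Unset Printing Implicit Defensive.
Import Order.TTheory GRing.Theory Num.Theory.
Local Open Scope ring_scope.

Section Defs.
Variable R : realType.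

Fixpoint traj (n m : nat) (A : 'M[R]_n) (B : 'M[R]_(n, m)) (x0 : 'cV[R]_n)
  (v : nat -> 'cV[R]_m) (t : nat) : 'cV[R]_n :=
  match t with
  | 0 => x0
  | t'.+1 => A *m traj A B x0 v t' + B *m v t'
  end.

Definition strongly_observable (n m p : nat) (A : 'M[R]_n) (B : 'M[R]_(n, m))
  (C : 'M[R]_(p, n)) (D : 'M[R]_(p, m)) : Prop :=
  forall (x0 : 'cV[R]_n) (v : nat -> 'cV[R]_m),
    (forall t, C *m traj A B x0 v t + D *m v t = 0) -> x0 = 0.

Definition sparse_strongly_observable (r s : nat) (n m p : nat)
  (A : 'M[R]_n) (B : 'M[R]_(n, m)) (C : 'M[R]_(p, n)) (D : 'M[R]_(p, m)) : Prop :=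
  forall (Gu : {set 'I_m}) (Gy : {set 'I_p}),
    (#|Gu| <= r)%N -> (p - s <= #|Gy|)%N ->
    strongly_observable A
      (colsub (fun k : 'I_#|Gu| => enum_val k) B)
      (rowsub (fun k : 'I_#|Gy| => enum_val k) C)
      (mxsub (fun k : 'I_#|Gy| => enum_val k) (fun k : 'I_#|Gu| => enum_val k) D).

Definition att_state (n m : nat) (A : 'M[R]_n) (B : 'M[R]_(n, m))
  (x0 : 'cV[R]_n) (u w : nat -> 'cV[R]_m) : nat -> 'cV[R]_n :=
  traj A B x0 (fun t => u t + w t).

Definition att_output (n m p : nat) (A : 'M[R]_n) (B : 'M[R]_(n, m))
  (C : 'M[R]_(p, n)) (D : 'M[R]_(p, m)) (x0 : 'cV[R]_n)
  (u w : nat -> 'cV[R]_m) (a : nat -> 'cV[R]_p) (t : nat) : 'cV[R]_p :=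
  C *m att_state A B x0 u w t + D *m (u t + w t) + a t.

Definition admissible_attack (r s m p : nat) (w : nat -> 'cV[R]_m)
  (a : nat -> 'cV[R]_p) : Prop :=
  (exists Gu : {set 'I_m}, (#|Gu| <= r)%N /\
     forall t (i : 'I_m), i \notin Gu -> w t i 0 = 0) /\
  (exists Gyb : {set 'I_p}, (#|Gyb| <= s)%N /\
     forall t (i : 'I_p), i \notin Gyb -> a t i 0 = 0).

Definition state_reconstructible (r s : nat) (n m p : nat) (A : 'M[R]_n)
  (B : 'M[R]_(n, m)) (C : 'M[R]_(p, n)) (D : 'M[R]_(p, m)) : Prop :=
  exists tau : nat,
    forall (u : nat -> 'cV[R]_m) (x0 x0' : 'cV[R]_n)
           (w w' : nat -> 'cV[R]_m) (a a' : nat -> 'cV[R]_p) (t : nat),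
      admissible_attack r s w a -> admissible_attack r s w' a' ->
      (forall k, (k <= t + tau)%N ->
         att_output A B C D x0 u w a k = att_output A B C D x0' u w' a' k) ->
      att_state A B x0 u w t = att_state A B x0' u w' t.

End Defs.

(* Main.v *)
Require Import Defs.
From HB Require Import structures.
From mathcomp Require Import all_boot all_order all_algebra.
From mathcomp Require Import reals.
From Stdlib Require Import Classical ClassicalEpsilon.
From mathcomp Require Import zify.
Import Order.TTheory GRing.Theory Num.Theory.
Local Open Scope ring_scope.
Set Implicit Arguments. Unset Strict Implicit.

Section Gen.
Variable R : realType.

Lemma traj_lin n m (A : 'M[R]_n) (B : 'M[R]_(n, m)) a x y v v' t :
  traj A B (a *: x + y) (fun t => a *: v t + v' t) t =
  a *: traj A B x v t + traj A B y v' t.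
Proof.
elim: t => [|t IH] //=; rewrite IH !mulmxDr -!scalemxAr.
by rewrite addrACA -scalerDr.
Qed.

Lemma traj0 n m (A : 'M[R]_n) (B : 'M[R]_(n, m)) t :
  traj A B 0 (fun _ => 0) t = 0.
Proof. by elim: t => [|t IH] //=; rewrite IH !mulmx0 addr0. Qed.

Lemma traj_sub n m (A : 'M[R]_n) (B : 'M[R]_(n, m)) x y v v' t :
  traj A B x v t - traj A B y v' t = traj A B (x - y) (fun t => v t - v' t) t.
Proof.
elim: t => [|t IH] //=; rewrite -IH !mulmxBr.
by rewrite opprD addrACA.
Qed.

Lemma traj_shift n m (A : 'M[R]_n) (B : 'M[R]_(n, m)) x v t j :
  traj A B x v (t + j) = traj A B (traj A B x v t) (fun j => v (t + j)) j.
Proof. by elim: j => [|j IH] /=; rewrite ?addn0 // addnS /= IH. Qed.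

Lemma traj_shift1 n m (A : 'M[R]_n) (B : 'M[R]_(n, m)) x v j :
  traj A B x v j.+1 = traj A B (A *m x + B *m v 0%N) (fun j => v j.+1) j.
Proof. by have := traj_shift A B x v 1 j; rewrite add1n. Qed.

Section Repr.
Variable n : nat.
Variable P : 'cV[R]_n -> Prop.
Hypothesis P0 : P 0.
Hypothesis PC : forall a x y, P x -> P y -> P (a *: x + y).

Lemma PD x y : P x -> P y -> P (x + y).
Proof. by move=> Px Py; have := PC 1 Px Py; rewrite scale1r. Qed.
Lemma PZ a x : P x -> P (a *: x).
Proof. by move=> Px; have := PC a Px P0; rewrite addr0. Qed.

Lemma good_sub k1 k2 (M : 'M[R]_(k1, n)) (N : 'M[R]_(k2, n)) :
  (forall i, P (row i M)^T) -> (N <= M)%MS -> forall i, P (row i N)^T.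
Proof.
move=> gM /submxP [D ->] i; rewrite row_mul mulmx_sum_row linear_sum /=.
apply: (big_ind P) => //; first exact: PD.
by move=> j _; rewrite linearZ /=; apply: PZ.
Qed.

Lemma repr_sub : exists M : 'M[R]_n, forall x, P x <-> (x^T <= M)%MS.
Proof.
suff [[M [gM HM]]|[M [_ HM]]] :
  (exists M : 'M[R]_n, (forall i, P (row i M)^T) /\ forall x, P x -> (x^T <= M)%MS)
  \/ (exists M : 'M[R]_n, (forall i, P (row i M)^T) /\ (n.+1 <= \rank M)%N).
- exists M => x; split; first exact: HM.
  move=> sxM; have := good_sub gM sxM 0.
  by rewrite (_ : row 0 x^T = x^T) ?trmxK //; apply/rowP => j; rewrite !mxE.
- by have := rank_leq_col M; rewrite leqNgt HM.
elim: n.+1 => [|j [L|[M [gM rM]]]].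
- right; exists 0; split => //= i; rewrite row0 trmx0.
  done.
- by left.
case: (classic (forall x, P x -> (x^T <= M)%MS)) => [H|]; first by left; exists M.
move=> /not_all_ex_not [x nH]; have {}nH : ~ (P x -> (x^T <= M)%MS) by [].
have Px : P x by apply: (not_imply_elim _ _ nH).
have nx := not_imply_elim2 _ _ nH.
right; exists (M + x^T)%MS; split.
  move=> i; have /sub_addsmxP [u eq] := submx_refl (M + x^T)%MS.
  have gx : forall i : 'I_1, P (row i x^T)^T.
    by move=> k; rewrite (_ : row k x^T = x^T) ?trmxK //; apply/rowP => l; rewrite !mxE (ord1 k).
  rewrite eq linearD /= linearD /=; apply: PD.
    exact: (good_sub gM (submxMl _ _)).
  exact: (good_sub gx (submxMl _ _)).
apply: (leq_ltn_trans rM).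
rewrite (ltn_leqif (mxrank_leqif_sup (addsmxSl M x^T))).
by apply/negP; rewrite addsmx_sub => /andP[_ ?]; apply: nx.
Qed.
End Repr.

Lemma nat_stab (f : nat -> nat) n :
  (forall k, (f k.+1 <= f k)%N) -> (f 0%N <= n)%N ->
  exists k, (k <= n)%N /\ f k.+1 = f k.
Proof.
move=> fdec f0.
suff /(_ n.+1) [[k [kn fk]]|] : forall j, (exists k, (k < j)%N /\ f k.+1 = f k)
    \/ (f j + j <= n)%N.
- by exists k.
- by lia.
elim=> [|j [[k [kj fk]]|IH]]; first by right; lia.
- by left; exists k; split => //; lia.
case: (eqVneq (f j.+1) (f j)) => e; first by left; exists j.
right; have := fdec j; lia.
Qed.

Section FH.
Variables (n m p : nat) (A : 'M[R]_n) (B : 'M[R]_(n, m))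
  (C : 'M[R]_(p, n)) (D : 'M[R]_(p, m)).

Definition out x v t := C *m traj A B x v t + D *m v t.
Definition Vp k x := exists v, forall j, (j < k)%N -> out x v j = 0.

Lemma Vp0 k : Vp k 0.
Proof.
exists (fun _ => 0) => j _; rewrite /out traj0 !mulmx0 addr0 //.
Qed.

Lemma VpC k a x y : Vp k x -> Vp k y -> Vp k (a *: x + y).
Proof.
move=> [vx hx] [vy hy]; exists (fun t => a *: vx t + vy t) => j jk.
rewrite /out traj_lin !mulmxDr -!scalemxAr addrACA -scalerDr.
by have := hx j jk; have := hy j jk; rewrite /out => -> ->; rewrite scaler0 addr0.
Qed.

Lemma Vp_le k k' x : (k <= k')%N -> Vp k' x -> Vp k x.
Proof. by move=> kk [v hv]; exists v => j jk; apply: hv; apply: leq_trans kk. Qed.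

Lemma Vp_step k x :
  Vp k.+1 x <-> exists v0, C *m x + D *m v0 = 0 /\ Vp k (A *m x + B *m v0).
Proof.
split.
  move=> [v hv]; exists (v 0%N); split; first exact: (hv 0%N).
  exists (fun j => v j.+1) => j jk.
  by have := hv j.+1 jk; rewrite /out traj_shift1.
move=> [v0 [h0 [v' hv']]].
exists (fun j => if j is j'.+1 then v' j' else v0) => -[|j] jk //.
by rewrite /out traj_shift1; apply: hv'.
Qed.

Lemma SO_fin : strongly_observable A B C D ->
  forall x, Vp n.+1 x -> x = 0.
Proof.
move=> SO.
have rep k : exists M : 'M[R]_n, forall x, Vp k x <-> (x^T <= M)%MS.
  by apply: repr_sub; [apply: Vp0 | move=> a x y; apply: VpC].
pose Mf k := proj1_sig (constructive_indefinite_description _ (rep k)).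
have HM k x : Vp k x <-> (x^T <= Mf k)%MS :=
  proj2_sig (constructive_indefinite_description _ (rep k)) x.
have sub k : (Mf k.+1 <= Mf k)%MS.
  apply/row_subP => i.
  have := HM k.+1 (row i (Mf k.+1))^T; rewrite trmxK => -[_ h].
  have := HM k (row i (Mf k.+1))^T; rewrite trmxK => -[h' _].
  by apply: h'; apply: (Vp_le (leqnSn k)); apply: h; apply: row_sub.
have [k [kn fk]] := @nat_stab (fun k => \rank (Mf k)) n
  (fun k => mxrankS (sub k)) (rank_leq_col _).
have sub' x : Vp k x -> Vp k.+1 x.
  have h := mxrank_leqif_sup (sub k).
  have sk : (Mf k <= Mf k.+1)%MS by rewrite -h.2 fk eqxx.
  by move=> /HM xk; apply/HM; apply: submx_trans sk.
suff Vk x : Vp k x -> x = 0.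
  by move=> x xV; apply: Vk; apply: (Vp_le _ xV); apply: leqW.
have step y : exists v0, Vp k y -> C *m y + D *m v0 = 0 /\ Vp k (A *m y + B *m v0).
  case: (classic (Vp k y)) => [H|H]; last by exists 0.
  have /Vp_step [v0 [h1 h2]] := sub' y H.
  by exists v0.
pose g y := proj1_sig (constructive_indefinite_description _ (step y)).
have hg y : Vp k y -> C *m y + D *m g y = 0 /\ Vp k (A *m y + B *m g y) :=
  proj2_sig (constructive_indefinite_description _ (step y)).
move=> xV.
pose z t := iter t (fun y => A *m y + B *m g y) x.
have zV t : Vp k (z t).
  by elim: t => [|t IH] //; rewrite /z iterS; apply: (hg _ IH).2.
have tz t : traj A B x (fun t => g (z t)) t = z t.
  by elim: t => [|t IH] //=; rewrite IH.
apply: (SO x (fun t => g (z t))) => t.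
by rewrite tz; apply: (hg _ (zV t)).1.
Qed.
End FH.

Lemma traj_ext n m (A : 'M[R]_n) (B : 'M[R]_(n, m)) x v v' :
  (forall t, v t = v' t) -> forall t, traj A B x v t = traj A B x v' t.
Proof. by move=> e; elim=> [|t IH] //=; rewrite IH e. Qed.

Lemma sub_mulB m k (G : {set 'I_m}) (B : 'M[R]_(k, m)) (d : 'cV[R]_m)
  (v : 'cV[R]_#|G|) :
  (forall j, j \notin G -> d j 0 = 0) -> (forall i, v i 0 = d (enum_val i) 0) ->
  B *m d = colsub (fun i : 'I_#|G| => enum_val i) B *m v.
Proof.
move=> dG vd; apply/matrixP => a b; rewrite !mxE (ord1 b).
rewrite (bigID (mem G)) /= [X in _ + X]big1 ?addr0; last first.
  by move=> j jG; rewrite dG ?mulr0.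
rewrite (big_enum_val (fun j => B a j * d j 0)).
by apply: eq_bigr => i _; rewrite !mxE vd.
Qed.

Lemma sub_traj n m (G : {set 'I_m}) (A : 'M[R]_n) (B : 'M[R]_(n, m)) x
  (d : nat -> 'cV[R]_m) (v : nat -> 'cV[R]_#|G|) :
  (forall t j, j \notin G -> d t j 0 = 0) ->
  (forall t i, v t i 0 = d t (enum_val i) 0) ->
  forall t, traj A B x d t = traj A (colsub (fun i : 'I_#|G| => enum_val i) B) x v t.
Proof.
move=> dG vd; elim=> [|t IH] //=; rewrite IH (sub_mulB B (dG t) (vd t)) //.
Qed.

Lemma sub_out n m p (G : {set 'I_m}) (H : {set 'I_p}) (C : 'M[R]_(p, n))
  (D : 'M[R]_(p, m)) (z : 'cV[R]_n) (d : 'cV[R]_m) (v : 'cV[R]_#|G|) i :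
  (forall j, j \notin G -> d j 0 = 0) -> (forall i, v i 0 = d (enum_val i) 0) ->
  (rowsub (fun k : 'I_#|H| => enum_val k) C *m z +
   mxsub (fun k : 'I_#|H| => enum_val k) (fun k : 'I_#|G| => enum_val k) D *m v) i 0
  = (C *m z + D *m d) (enum_val i) 0.
Proof.
move=> dG vd; rewrite (sub_mulB D dG vd) !mxE; congr (_ + _).
  by apply: eq_bigr => j _; rewrite !mxE.
by apply: eq_bigr => j _; rewrite !mxE.
Qed.

Lemma split_set (T : finType) (S : {set T}) r : (#|S| <= 2 * r)%N ->
  exists S1 S2 : {set T}, [/\ (#|S1| <= r)%N, (#|S2| <= r)%N &
    forall x, x \in S -> x \in S1 \/ x \in S2].
Proof.
move=> hS; exists [set x in take r (enum S)], [set x in drop r (enum S)]; split.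
- by rewrite cardsE (leq_trans (card_size _)) // size_take_min geq_minl.
- rewrite cardsE (leq_trans (card_size _)) // size_drop -cardE; lia.
move=> x; rewrite -mem_enum !inE -{1}(cat_take_drop r (enum S)) mem_cat.
by case/orP; [left|right].
Qed.
End Gen.

Lemma diff3 (V : zmodType) (a b c a' b' c' : V) :
  (a + b + c) - (a' + b' + c') = (a - a') + (b - b') + (c - c').
Proof. by rewrite !opprD addrACA; congr (_ + _); rewrite addrACA. Qed.

Lemma recon_of_sso (R : realType) n m p (A : 'M[R]_n) (B : 'M[R]_(n, m))
  (C : 'M[R]_(p, n)) (D : 'M[R]_(p, m)) r s :
  sparse_strongly_observable (2 * r) (2 * s) A B C D ->
  state_reconstructible r s A B C D.
Proof.
move=> SSO; exists n => u x0 x0' w w' a a' t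
  [[G1 [cG1 hw]] [H1 [cH1 ha]]] [[G2 [cG2 hw']] [H2 [cH2 ha']]] Hout.
pose G := G1 :|: G2; pose H := ~: (H1 :|: H2).
have cG : (#|G| <= 2 * r)%N by rewrite /G; have := cardsUI G1 G2; lia.
have cH : (p - 2 * s <= #|H|)%N.
  by rewrite /H; have := cardsC (H1 :|: H2); have := cardsUI H1 H2; rewrite card_ord; lia.
have SO := SSO G H cG cH.
pose d k := (u k + w k) - (u k + w' k).
have dG k j : j \notin G -> d k j 0 = 0.
  rewrite !inE negb_or => /andP[j1 j2]; rewrite /d !mxE hw // hw' //.
  by rewrite subrr.
pose v j := \col_(i < #|G|) d (t + j)%N (enum_val i) 0.
have vd j i : v j i 0 = d (t + j)%N (enum_val i) 0 by rewrite mxE.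
pose e := att_state A B x0 u w t - att_state A B x0' u w' t.
suff : e = 0 by move/eqP; rewrite subr_eq0 => /eqP.
apply: (SO_fin SO); exists v => j jn.
have te : traj A B e (fun j => d (t + j)%N) j =
  att_state A B x0 u w (t + j) - att_state A B x0' u w' (t + j).
  by rewrite /e /att_state !traj_sub traj_shift.
apply/colP => i; rewrite /out.
rewrite -(@sub_traj _ _ _ G A B e (fun j => d (t + j)%N) v
  (fun k => dG (t + k)%N) vd).
rewrite (@sub_out _ _ _ _ G H C D _ _ _ i (dG (t + j)%N) (vd j)) te.
have := Hout (t + j)%N ltac:(lia).
move/eqP; rewrite -subr_eq0 /att_output diff3 -!mulmxBr addr_eq0 => /eqP ->.
have := enum_valP i; rewrite !inE negb_or => /andP[i1 i2].
by rewrite !mxE ha // ha' // subrr oppr0.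
Qed.

Lemma sso_of_recon (R : realType) n m p (A : 'M[R]_n) (B : 'M[R]_(n, m))
  (C : 'M[R]_(p, n)) (D : 'M[R]_(p, m)) r s :
  state_reconstructible r s A B C D ->
  sparse_strongly_observable (2 * r) (2 * s) A B C D.
Proof.
move=> [tau Rec] Gu Gy cGu cGy x v Hv.
have [G1 [G2 [c1 c2 hG]]] := split_set cGu.
have cGyc : (#|~: Gy| <= 2 * s)%N by have := cardsC Gy; rewrite card_ord; lia.
have [H1 [H2 [c3 c4 hH]]] := split_set cGyc.
pose d t := \col_(j < m) \sum_(i < #|Gu|) (if enum_val i == j then v t i 0 else 0).
have dv t i : v t i 0 = d t (enum_val i) 0.
  rewrite mxE (bigD1 i) //= eqxx big1 ?addr0 // => i' ne.
  by rewrite (inj_eq enum_val_inj) (negbTE ne).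
have dG t j : j \notin Gu -> d t j 0 = 0.
  move=> jG; rewrite mxE big1 // => i _; case: eqP => // e.
  by move: jG; rewrite -e enum_valP.
clearbody d.
pose z t := C *m traj A B x d t + D *m d t.
have zGy t i : i \in Gy -> z t i 0 = 0.
  move=> iG; move: (Hv t).
  rewrite -(@sub_traj _ _ _ Gu A B x d v dG dv t).
  move=> /(congr1 (fun M : 'M[R]_(#|Gy|, 1) => M (enum_rank_in iG i) 0)).
  rewrite (@sub_out _ _ _ _ Gu Gy C D _ _ _ _ (dG t) (dv t)).
  rewrite (enum_rankK_in iG iG) /z !mxE => ->.
  by rewrite ?mxE.
have zdef k : C *m traj A B x d k + D *m d k = z k by [].
clearbody z.
pose w t := \col_(j < m) (if j \in G1 then d t j 0 else 0).
pose w' t := \col_(j < m) (if j \in G1 then 0 else - d t j 0).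
pose a t := \col_(i < p) (if i \in H1 then - z t i 0 else 0).
pose a' t := \col_(i < p) (if i \in H1 then 0 else z t i 0).
apply: (Rec (fun _ => 0) x 0 w w' a a' 0%N).
- split.
    by exists G1; split => // t j jG; rewrite mxE (negbTE jG).
  by exists H1; split => // t i iH; rewrite mxE (negbTE iH).
- split.
    exists G2; split => // t j j2; rewrite mxE; case: ifP => // j1.
    rewrite dG ?oppr0 //; apply/negP => /hG [] ; by rewrite ?j1 ?(negbTE j2).
  exists H2; split => // t i i2; rewrite mxE; case: ifP => // i1.
  apply: zGy; apply: contraT => iGy.
  have : i \in ~: Gy by rewrite inE.
  by move=> /hH []; rewrite ?i1 ?(negbTE i2).
move=> k _; apply/eqP; rewrite -subr_eq0 /att_output diff3 -!mulmxBr.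
have hwd t : (0 + w t) - (0 + w' t) = d t.
  by apply/colP => j; rewrite !mxE; case: ifP => _; rewrite !add0r ?subr0 ?sub0r ?opprK.
rewrite /att_state traj_sub subr0 (traj_ext _ _ _ hwd) hwd zdef.
apply/eqP/colP => i; rewrite !mxE.
by case: ifP => _; rewrite ?subr0 ?sub0r ?addrN.
Qed.

Unset Implicit Arguments.
Set Strict Implicit.

Theorem theorem1 (R : realType) (n m p : nat) (A : 'M[R]_n) (B : 'M[R]_(n, m))
  (C : 'M[R]_(p, n)) (D : 'M[R]_(p, m)) (r s : nat) :
  \rank (col_mx B D) = m ->
  (state_reconstructible r s A B C D <->
   sparse_strongly_observable (2 * r) (2 * s) A B C D).
Proof.
by move=> _; split; [apply: sso_of_recon | apply: recon_of_sso].
Qed.
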